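(* For every $\varepsilon>0$ there exists $n_0$ such that every graph $G$ on $n\ge n_0$ vertices that contains no clique of size $\frac12\log_2 n$ satisfies $\chi_\ell(G)\le(2+\varepsilon)\,n/\log_2 n$. Equivalently, $R_{\chi_\ell}(k,\underline{k})\le 2^{(2+o(1))k}$ as $k\to\infty$.
   Context: $\chi_\ell(G)$ is the list chromatic number: the least $k$ such that for every assignment of lists $L(v)\subset\mathbb Z^+$ with $|L(v)|=k$ there is a proper colouring $c$ with $c(v)\in L(v)$ for all $v$. For positive integers $k,\ell$, the list chromatic Ramsey number $R_{\chi_\ell}(k,\underline{\ell})$ is the least $n$ such that every $K_k$-free graph $G$ on $n$ vertices satisfies $\chi_\ell(G)<n/\ell$. *)

(* Defs.v *)
From Stdlib Require Import Reals.
From mathcomp Require Import all_boot.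
Set Implicit Arguments. Unset Strict Implicit. Unset Printing Implicit Defensive.

Definition simple_graph (n : nat) (e : rel 'I_n) : Prop :=
  (forall u v, e u v = e v u) /\ (forall v, e v v = false).

Definition is_clique (n : nat) (e : rel 'I_n) (S : {set 'I_n}) : Prop :=
  forall u v, u \in S -> v \in S -> u != v -> e u v.

Definition k_list_assignment (n k : nat) (L : 'I_n -> seq nat) : Prop :=
  forall v, [/\ uniq (L v), size (L v) = k & all (fun c => 0 < c) (L v)].

Definition choosable (n : nat) (e : rel 'I_n) (k : nat) : Prop :=
  forall L : 'I_n -> seq nat, k_list_assignment k L ->
    exists c : 'I_n -> nat,
      (forall v, c v \in L v) /\ (forall u v, e u v -> c u != c v).

Definition is_list_chromatic_number (n : nat) (e : rel 'I_n) (k : nat) : Prop :=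
  choosable e k /\ (forall j, (j < k)%N -> ~ choosable e j).

Definition log2 (x : R) : R := Rdiv (ln x) (ln (INR 2)).

(* Main.v *)
Require Import Defs.
From Stdlib Require Import Reals Lra Classical.
From mathcomp Require Import all_boot.
From mathcomp Require Import zify.
Set Implicit Arguments. Unset Strict Implicit. Unset Printing Implicit Defensive.

Section HallS.
Variables (T U : finType) (u0 : U).
Definition NB (R : T -> {set U}) (S : {set T}) := \bigcup_(v in S) R v.

Lemma NB_sub (R : T -> {set U}) (S : {set T}) v : v \in S -> R v \subset NB R S.
Proof. by move=> vS; apply: (bigcup_sup v). Qed.

Lemma hall_gen s : forall (R : T -> {set U}) (W : {set T}), #|W| <= s ->
  (forall S : {set T}, S \subset W -> #|S| <= #|NB R S|) ->
  exists f : T -> U, (forall v, v \in W -> f v \in R v) /\ {in W &, injective f}.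
Proof.
elim: s => [|s IH] R W Ws HW.
  have W0 : W = set0 by apply/eqP; rewrite -cards_eq0; lia.
  by exists (fun _ => u0); split => [v|u v]; rewrite W0 inE.
case: (boolP [exists S : {set T}, [&& S \proper W, S != set0 & #|NB R S| <= #|S|]]).
  case/existsP => S /and3P [SW S0 NS].
  have sSW := proper_sub SW.
  have cS := proper_card SW.
  have [f1 [f1R f1i]] : exists f : T -> U, (forall v, v \in S -> f v \in R v) /\ {in S &, injective f}.
    apply: IH; first by lia.
    by move=> S' sS'; apply: HW; apply: subset_trans sS' sSW.
  pose R2 := fun v => R v :\: NB R S.
  have [f2 [f2R f2i]] : exists f : T -> U, (forall v, v \in W :\: S -> f v \in R2 v) /\ {in W :\: S &, injective f}.
    apply: IH.
      rewrite cardsDS //. have : 0 < #|S| by rewrite card_gt0. lia.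
    move=> S' sS'.
    have dis : [disjoint S & S'].
      rewrite disjoint_sym disjoint_subset; apply: subset_trans sS' _.
      by apply/subsetP => x; rewrite !inE => /andP[].
    have sU : S :|: S' \subset W.
      rewrite subUset sSW /=; apply: subset_trans sS' _; exact: subsetDl.
    have := HW _ sU.
    rewrite cardsU (disjoint_setI0 dis) cards0 subn0.
    have -> : NB R (S :|: S') = NB R S :|: NB R2 S'.
      apply/setP => x; apply/idP/idP.
        case/bigcupP => v; rewrite inE => /orP [vS|vS'] xR.
          by rewrite inE; apply/orP; left; apply/bigcupP; exists v.
        rewrite inE; case: (boolP (x \in NB R S)) => //= xN.
        apply/bigcupP; exists v => //.
        by rewrite inE xN.
      rewrite inE => /orP [/bigcupP [v vS xR]|/bigcupP [v vS' ]].
        by apply/bigcupP; exists v; rewrite // inE vS.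
      rewrite inE => /andP [_ xR]; by apply/bigcupP; exists v; rewrite // inE vS' orbT.
    rewrite cardsU.
    have : #|NB R S :&: NB R2 S'| = 0.
      apply/eqP; rewrite cards_eq0; apply/eqP/setP => x; rewrite !inE.
      apply/negbTE; apply/negP => /andP [xN /bigcupP [v _]].
      by rewrite inE xN.
    lia.
  exists (fun v => if v \in S then f1 v else f2 v); split.
    move=> v vW; case: ifP => vS; first exact: f1R.
    by have := f2R v; rewrite !inE vS vW /= => /(_ isT) /andP [].
  move=> u v uW vW /=.
  case: ifP => uS; case: ifP => vS.
  - exact: f1i.
  - move=> E; have := f2R v; rewrite !inE vS vW /= => /(_ isT) /andP [].
    by rewrite -E (subsetP (NB_sub R uS)) ?f1R.
  - move=> E; have := f2R u; rewrite !inE uS uW /= => /(_ isT) /andP [].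
    by rewrite E (subsetP (NB_sub R vS)) ?f1R.
  - by apply: f2i; rewrite inE ?uS ?vS.
rewrite negb_exists => /forallP Hn.
case: (set_0Vmem W) => [W0|[v vW]].
  by exists (fun _ => u0); split => [w|u w]; rewrite W0 inE.
have : 0 < #|R v|.
  have := HW [set v]; rewrite sub1set vW cards1 => /(_ isT).
  by rewrite /NB big_set1.
rewrite card_gt0 => /set0Pn [x xR].
pose R2 := fun w => R w :\ x.
have [f2 [f2R f2i]] : exists f : T -> U, (forall w, w \in W :\ v -> f w \in R2 w) /\ {in W :\ v &, injective f}.
  apply: IH.
    have := cardsD1 v W; rewrite vW; lia.
  move=> S' sS'.
  case: (eqVneq S' set0) => [->|S'0]; first by rewrite cards0.
  have pS : S' \proper W.
    apply/properP; split; first by apply: subset_trans sS' _; apply: subsetDl.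
    exists v => //; apply/negP => vS; have := subsetP sS' v vS; by rewrite !inE eqxx.
  have := Hn S'; rewrite pS S'0 /= -ltnNge => lt.
  have : NB R S' \subset x |: NB R2 S'.
    apply/subsetP => y /bigcupP [w wS yR]; rewrite inE.
    case: (eqVneq y x) => [->|yx]; rewrite ?inE ?eqxx //=; apply/orP; right; apply/bigcupP; exists w => //; by rewrite !inE yx.
  move/subset_leq_card; rewrite cardsU1; case: (x \in NB R2 S'); lia.
exists (fun w => if w == v then x else f2 w); split.
  move=> w wW; case: eqP => [->//|/eqP wv].
  by have := f2R w; rewrite !inE wv wW /= => /(_ isT) /andP [].
move=> u w uW wW /=.
case: eqP => [->|/eqP uv]; case: eqP => [->|/eqP wv] //.
- move=> E; have := f2R w; rewrite !inE wv wW /= => /(_ isT) /andP [].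
  by rewrite -E eqxx.
- move=> E; have := f2R u; rewrite !inE uv uW /= => /(_ isT) /andP [].
  by rewrite E eqxx.
- by apply: f2i; rewrite !inE ?uv ?wv ?uW ?wW.
Qed.
End HallS.

Definition indep (n : nat) (e : rel 'I_n) (I : {set 'I_n}) : Prop :=
  forall u v, u \in I -> v \in I -> u != v -> ~~ e u v.

Lemma ramsey (n : nat) (e : rel 'I_n) : simple_graph e -> forall s a b (U : {set 'I_n}),
  a + b = s -> 2 ^ (a + b) <= #|U| ->
  (exists S : {set 'I_n}, S \subset U /\ is_clique e S /\ #|S| = a) \/
  (exists I : {set 'I_n}, I \subset U /\ indep e I /\ #|I| = b).
Proof.
move=> [esym eirr]; elim => [|s IH] a b U Hs Hc.
  left; exists set0; split; first exact: sub0set.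
  split; last by rewrite cards0; lia.
  by move=> u v; rewrite inE.
case: a Hs Hc => [|a] Hs Hc.
  left; exists set0; split; first exact: sub0set.
  by split; [move=> u v; rewrite inE | rewrite cards0].
case: b Hs Hc => [|b] Hs Hc.
  right; exists set0; split; first exact: sub0set.
  by split; [move=> u v; rewrite inE | rewrite cards0].
have : 0 < #|U| by have := expn_gt0 2 (a.+1 + b.+1); lia.
case/card_gt0P => v vU.
pose N := (U :\ v) :&: [set u | e v u].
pose M := (U :\ v) :\: [set u | e v u].
have cNM : #|N| + #|M| = #|U| - 1.
  by rewrite cardsID (cardsD1 v U) vU; lia.
have NU : N \subset U by apply/subsetP => x; rewrite !inE => /andP [/andP [_ ->]].
have MU : M \subset U by apply/subsetP => x; rewrite !inE => /andP [_ /andP [_ ->]].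
have vN : v \notin N by rewrite !inE eqxx.
have vM : v \notin M by rewrite !inE eqxx /= ?andbF.
have E2 : 2 ^ (a.+1 + b.+1) = 2 * 2 ^ (a + b.+1) by rewrite addSn expnS.
case: (leqP (2 ^ (a + b.+1)) #|N|) => HN.
  case: (IH a b.+1 N) => //; first by lia.
    move=> [S [SN [Sc Sa]]]; left; exists (v |: S); split.
      by rewrite subUset sub1set vU (subset_trans SN NU).
    split; last by rewrite cardsU1 Sa; have -> : v \notin S by apply: contra vN; apply: (subsetP SN).
    move=> x y; rewrite !inE => /orP [/eqP ->|xS] /orP [/eqP ->|yS]; rewrite ?eqxx //.
    - by move=> _; have := subsetP SN y yS; rewrite !inE => /andP [_ ->].
    - by move=> _; rewrite esym; have := subsetP SN x xS; rewrite !inE => /andP [_ ->].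
    - by apply: Sc.
  move=> [I [IN [Ii Ib]]]; right; exists I; split => //; exact: subset_trans IN NU.
have HM : 2 ^ (a.+1 + b) <= #|M|.
  have : 2 ^ (a.+1 + b) = 2 ^ (a + b.+1) by rewrite addSn addnS.
  lia.
case: (IH a.+1 b M) => //; first by lia.
  move=> [S [SM [Sc Sa]]]; left; exists S; split => //; exact: subset_trans SM MU.
move=> [I [IM [Ii Ib]]]; right; exists (v |: I); split.
  by rewrite subUset sub1set vU (subset_trans IM MU).
split; last by rewrite cardsU1 Ib; have -> : v \notin I by apply: contra vM; apply: (subsetP IM).
move=> x y; rewrite !inE => /orP [/eqP ->|xS] /orP [/eqP ->|yS]; rewrite ?eqxx //.
- by move=> _; have := subsetP IM y yS; rewrite !inE => /andP [-> _].
- by move=> _; rewrite esym; have := subsetP IM x xS; rewrite !inE => /andP [-> _].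
- by apply: Ii.
Qed.

Lemma card_valset_le N (s : seq nat) : #|[set x : 'I_N | val x \in s]| <= size s.
Proof.
rewrite cardE -(size_map val); apply: uniq_leq_size.
  by rewrite map_inj_uniq ?enum_uniq //; apply: val_inj.
by move=> y /mapP [x]; rewrite mem_enum inE => xs ->.
Qed.

Lemma card_valset_ge N (s : seq nat) : uniq s -> (forall y, y \in s -> y < N) ->
  size s <= #|[set x : 'I_N | val x \in s]|.
Proof.
move=> us sN; rewrite cardE -(size_map val); apply: uniq_leq_size => // y ys.
apply/mapP; exists (Ordinal (sN y ys)) => //; by rewrite mem_enum inE.
Qed.

Lemma card_RD N (s D : seq nat) : uniq s -> (forall y, y \in s -> y < N) ->
  size s - size D <= #|[set x : 'I_N | (val x \in s) && (val x \notin D)]|.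
Proof.
move=> us sN.
have -> : [set x : 'I_N | (val x \in s) && (val x \notin D)] =
   [set x : 'I_N | val x \in s] :\: [set x : 'I_N | val x \in D].
  by apply/setP => x; rewrite !inE andbC.
have h1 := card_valset_ge us sN.
have h2 := card_valset_le N D.
have h3 := subset_leq_card (subsetIr [set x : 'I_N | val x \in s] [set x : 'I_N | val x \in D]).
rewrite cardsD; lia.
Qed.

Lemma sum_in_card (T : finType) (S : {set T}) (P : pred T) :
  \sum_(v in S) (P v : nat) = #|[set v in S | P v]|.
Proof.
rewrite -sum1_card -big_mkcondr /=; apply: eq_bigl => v; by rewrite !inE.
Qed.

Lemma colour_iter (n : nat) (e : rel 'I_n) (eirr : forall v, e v v = false)
  (m t k Nc : nat) (L : 'I_n -> seq nat) :
  0 < m -> 0 < t -> n %/ t + m <= k ->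
  (forall v, uniq (L v) /\ size (L v) = k) ->
  (forall v y, y \in L v -> y < Nc.+1) ->
  (forall U : {set 'I_n}, m <= #|U| -> exists I : {set 'I_n}, I \subset U /\ indep e I /\ t <= #|I|) ->
  forall s (W : {set 'I_n}) (D : seq nat), #|W| <= s -> size D * t + #|W| <= n ->
  exists c : 'I_n -> nat, (forall v, v \in W -> (c v \in L v) && (c v \notin D)) /\
     (forall u v, u \in W -> v \in W -> e u v -> c u != c v).
Proof.
move=> m0 t0 hk hL hN hI; elim => [|s IH] W D Ws HD.
  have W0 : W = set0 by apply/eqP; rewrite -cards_eq0; lia.
  by exists (fun _ => 0); split => [v|u v]; rewrite W0 inE.
case: (boolP [exists x : 'I_Nc.+1, (val x \notin D) && (m <= #|[set v in W | val x \in L v]|)]).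
  case/existsP => x /andP [xD xm].
  have [I [IU [Ii It]]] := hI _ xm.
  have IW : I \subset W by apply: subset_trans IU _; apply/subsetP => v; rewrite inE => /andP [].
  have cI := subset_leq_card IW.
  have cWI : #|W :\: I| = #|W| - #|I| by rewrite cardsDS.
  have h1 : #|W :\: I| <= s by lia.
  have h2 : size (val x :: D) * t + #|W :\: I| <= n by rewrite /= mulSn cWI; move: (size D * t) HD => z HD; lia.
  have [c' [c'L c'e]] := IH (W :\: I) (val x :: D) h1 h2.
  exists (fun v => if v \in I then val x else c' v); split.
    move=> v vW; case: ifP => vI.
      by have := subsetP IU v vI; rewrite inE => /andP [_ ->].
    have := c'L v; rewrite !inE vI vW /= => /(_ isT) /andP [-> ].
    by case/norP => _ ->.
  move=> u v uW vW euv; case: ifP => uI; case: ifP => vI.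
  - case: (eqVneq u v) => [uv|uv]; first by rewrite uv eirr in euv.
    by have := Ii u v uI vI uv; rewrite euv.
  - have := c'L v; rewrite !inE vI vW /= => /(_ isT) /andP [_].
    by case/norP; rewrite eq_sym.
  - have := c'L u; rewrite !inE uI uW /= => /(_ isT) /andP [_].
    by case/norP.
  - by apply: c'e; rewrite // inE ?uI ?vI.
rewrite negb_exists => /forallP Hn.
pose R := fun v => [set x : 'I_Nc.+1 | (val x \in L v) && (val x \notin D)].
have HR : forall v, m <= #|R v|.
  move=> v; have [uL sL] := hL v; apply: leq_trans (card_RD D uL (hN v)).
  have : size D <= n %/ t by rewrite leq_divRL //; move: (size D * t) HD => z HD; lia.
  rewrite sL; lia.
have HW : forall S : {set 'I_n}, S \subset W -> #|S| <= #|NB R S|.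
  move=> S SW.
  have E1 : #|S| * m <= \sum_(v in S) #|R v|.
    by rewrite -sum_nat_const; apply: leq_sum => v _; exact: HR.
  have E2 : \sum_(v in S) #|R v| = \sum_(x in NB R S) \sum_(v in S) (x \in R v : nat).
    rewrite [RHS]exchange_big /=; apply: eq_bigr => v vS; rewrite sum_in_card.
    apply: eq_card => x; rewrite inE; case xR: (x \in R v); rewrite ?andbT ?andbF //.
    by rewrite (subsetP (NB_sub R vS) x xR).
  have E3 : \sum_(x in NB R S) \sum_(v in S) (x \in R v : nat) <= \sum_(x in NB R S) m.-1.
    apply: leq_sum => x _; rewrite sum_in_card; have := Hn x.
    case: (boolP (val x \in D)) => xD /=.
      have -> : [set v in S | x \in R v] = set0.
        by apply/setP => v; rewrite !inE xD /= ?andbF.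
      by rewrite cards0.
    rewrite -ltnNge => lt; rewrite -ltnS (ltn_predK m0); apply: leq_ltn_trans lt.
    apply: subset_leq_card; apply/subsetP => v; rewrite !inE => /andP [vS /andP [-> _]].
    by rewrite (subsetP SW v vS).
  rewrite sum_nat_const in E3.
  have E4 : #|NB R S| * m.-1 <= #|NB R S| * m by rewrite leq_mul2l leq_pred orbT.
  rewrite -(leq_pmul2r m0); apply: leq_trans E1 _; rewrite E2; exact: leq_trans E3 E4.
have [f [fR fi]] := @hall_gen _ _ ord0 #|W| R W (leqnn _) HW.
exists (fun v => val (f v)); split.
  by move=> v vW; have := fR v vW; rewrite inE.
move=> u v uW vW euv; apply/negP => /eqP /val_inj fuv.
have uv := fi u v uW vW fuv; by rewrite uv eirr in euv.
Qed.

Lemma sq_le_pow z : (z + 7) * (z + 7) <= 2 ^ (z + 6).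
Proof.
elim: z => [//|z IH].
rewrite addSn expnS.
have : (z.+1 + 7) * (z.+1 + 7) <= 2 * ((z + 7) * (z + 7)) by nia.
move: ((z + 7) * (z + 7)) IH => q IH. move: (2 ^ (z+6)) IH => r IH. lia.
Qed.

Lemma lin_lt_pow d y : 6 + d <= y -> d * (y + 1) < 2 ^ y.
Proof.
move=> hy.
have := sq_le_pow (y - 6).
have -> : y - 6 + 6 = y by lia.
have -> : y - 6 + 7 = y + 1 by lia.
have : d * (y + 1) < (y + 1) * (y + 1) by nia.
move: (d * (y + 1)) ((y + 1) * (y + 1)) (2 ^ y) => u v w; lia.
Qed.

Lemma aux p h w : (2*p+3)*w <= h -> 2*p+3 <= h -> p*(2*h+2) <= (2*p+3)*(h-1-w).
Proof.
move=> H1 H2.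
have hw : w + 1 <= h by nia.
have [q E] : exists q, h = q + 1 + w by exists (h-1-w); lia.
subst h.
have -> : q+1+w-1-w = q by lia.
nia.
Qed.

Lemma params p l : 0 < p -> (2*(2*p+3)) * (6 + p * (2*(2*p+3))) + 2*(2*p+3) + 2 <= l ->
  let h := l./2 in let w := l %/ (2*(2*p+3)) in
  let j := (trunc_log 2 (p * (l + 1))).+1 in
  let a := h.+1 in let b := l - a - j in
  [/\ p * (l + 1) < 2 ^ j, a + j <= l, 0 < b & p * (l + 1) <= (2*p+3) * b].
Proof.
move=> p0 hl h w j a b.
set C := 2*(2*p+3).
have C0 : 0 < C by rewrite /C; lia.
have hj : p * (l + 1) < 2 ^ j by apply: trunc_log_ltn.
have lw : l < C * (w + 1).
  have := ltn_ceil l C0. rewrite /w. move: (l %/ C) => q. lia.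
have wl : C * w <= l by rewrite /w mulnC; exact: leq_divM.
have w6 : 6 + p * C <= w.
  rewrite /w leq_divRL //. move: (p * C) hl => q. rewrite /C. nia.
have pw : p * (l + 1) < 2 ^ w.
  have := lin_lt_pow w6. have : p * (l + 1) <= p * C * (w + 1) by rewrite -mulnA leq_mul2l; apply/orP; right; lia.
  move: (p * (l+1)) (p * C * (w + 1)) (2 ^ w) => u v z; lia.
have jw : j <= w.
  rewrite /j ltnNge; apply/negP => wt.
  have := trunc_logP (p:=2) (n:=p * (l + 1)) isT ltac:(by rewrite muln_gt0 p0 addn1).
  have := leq_pexp2l (m:=2) isT wt.
  move: (2 ^ trunc_log 2 (p * (l + 1))) (2 ^ w) (p * (l+1)) pw => u v z; lia.
have hh : l = h.*2 + odd l by rewrite /h; rewrite -{1}(odd_double_half l) addnC.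
have ol : odd l <= 1 by case: (odd l).
have Pw : (2*p+3) * w <= h.
  have e1 : C * w = 2 * ((2*p+3) * w) by rewrite /C mulnA.
  rewrite e1 in wl; move: ((2*p+3)*w) wl => X wl; lia.
have hP : 2*p+3 <= h.
  move: hl; rewrite /C; move: (2 * (2 * p + 3) * (6 + p * (2 * (2 * p + 3)))) => X; lia.
have w3 : 3 * w <= h by move: Pw; rewrite mulnDl; move: (2*p*w) => X; lia.
have jh : a + j <= l by rewrite /a; lia.
have b0 : 0 < b by rewrite /b /a; lia.
split => //.
have f1 : p * (l + 1) <= p * (2*h+2) by rewrite leq_mul2l; apply/orP; right; lia.
have f2 : (2*p+3) * (h-1-w) <= (2*p+3) * b by rewrite leq_mul2l; apply/orP; right; rewrite /b /a; lia.
exact: leq_trans f1 (leq_trans (aux Pw hP) f2).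
Qed.
Section RealSec.
Local Open Scope R_scope.

Lemma INR_exp2 k : INR (2 ^ k)%N = pow 2 k.
Proof.
elim: k => [//|k IH]. rewrite expnS mult_INR IH /=. lra.
Qed.

Lemma INR2 : INR 2 = 2.
Proof. simpl; lra. Qed.

Lemma ln2_pos : (0 < ln (INR 2)).
Proof. rewrite INR2; have := ln_lt_2; lra. Qed.

Lemma ltINR a b : (a < b)%N -> (INR a < INR b).
Proof. move/ltP; exact: lt_INR. Qed.

Lemma leINR a b : (a <= b)%N -> (INR a <= INR b).
Proof. move/leP; exact: le_INR. Qed.

Lemma log2_lt n l : (0 < n)%N -> (n < 2 ^ l)%N -> (log2 (INR n) < INR l).
Proof.
move=> n0 nl; rewrite /log2.
have h1 : (0 < INR n) by apply: lt_0_INR; apply/ltP.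
have h2 := ltINR nl. rewrite INR_exp2 in h2.
have := ln_increasing _ _ h1 h2; rewrite ln_pow; last lra.
rewrite -INR2 => h3.
have h4 := ln2_pos.
apply (Rmult_lt_reg_r (ln (INR 2))) => //.
unfold Rdiv; rewrite Rmult_assoc Rinv_l; lra.
Qed.

Lemma log2_pos n : (1 < n)%N -> (0 < log2 (INR n)).
Proof.
move=> n1; rewrite /log2.
have h1 := ltINR n1. rewrite /= in h1.
have := ln_increasing 1 _ ltac:(lra) h1; rewrite ln_1 => h3.
have h4 := ln2_pos.
unfold Rdiv; apply: Rmult_lt_0_compat => //; exact: Rinv_0_lt_compat.
Qed.

Lemma real_final (p K n l : nat) (eps : R) : (0 < eps) -> (4 < INR p * eps) ->
  (p * K * (l + 1) <= (2 * p + 4) * n)%N -> (0 < log2 (INR n)) -> (log2 (INR n) < INR (l + 1)%N) ->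
  (INR K <= (INR 2 + eps) * INR n / log2 (INR n)).
Proof.
move=> e0 pe H L0 Ll.
have H' := leINR H. rewrite !mult_INR !plus_INR in H'.
have p0 : (0 < INR p) by apply/(Rmult_lt_reg_r eps); lra.
have K0 : (0 <= INR K) by apply: pos_INR.
have n0 : (0 <= INR n) by apply: pos_INR.
rewrite INR2.
have A : (INR K * log2 (INR n) <= (2 + eps) * INR n).
  have B : (INR p * (INR K * log2 (INR n)) <= INR p * ((2 + eps) * INR n)).
    have C : (INR K * log2 (INR n) <= INR K * INR (l + 1)%N) by apply: Rmult_le_compat_l => //; lra.
    have D : (INR p * (INR K * INR (l + 1)%N) <= (2 * INR p + INR 4) * INR n).
      rewrite -!Rmult_assoc; move: H'; rewrite !plus_INR /=. lra.
    have E : ((2 * INR p + INR 4) * INR n <= INR p * ((2 + eps) * INR n)).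
      have -> : INR 4 = 4 by simpl; lra.
      nra.
    nra.
  exact: (Rmult_le_reg_l (INR p)).
apply (Rmult_le_reg_r (log2 (INR n))) => //.
unfold Rdiv; rewrite Rmult_assoc Rinv_l; lra.
Qed.

End RealSec.

Lemma Kbound p n l a b j : p*(l+1) < 2^j -> a + j <= l -> 0 < b ->
  p*(l+1) <= (2*p+3)*b -> 2^l <= n -> b = l - a - j ->
  p * (n %/ b + 2^(a+b)) * (l+1) <= (2*p+4)*n.
Proof.
move=> h1 h2 b0 h3 h4 hb.
have e1 : p * (n %/ b + 2 ^ (a + b)) * (l + 1) = n %/ b * (p * (l+1)) + 2^(a+b) * (p*(l+1)).
  by rewrite !mulnDr !mulnDl; ring_simplify; lia.
rewrite e1.
have f1 : n %/ b * (p * (l+1)) <= (2*p+3) * n.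
  apply: leq_trans (leq_mul (leqnn _) h3) _.
  rewrite mulnCA leq_mul2l; apply/orP; right; exact: leq_divM.
have f2 : 2^(a+b) * (p*(l+1)) <= n.
  apply: leq_trans (leq_mul (leqnn _) (ltnW h1)) _.
  rewrite -expnD; have -> : a + b + j = l by rewrite hb; lia.
  exact: h4.
move: f1 f2; move: (n %/ b * (p * (l+1))) (2^(a+b) * (p*(l+1))) => X Y; lia.
Qed.

Lemma min_choosable n (e : rel 'I_n) : forall N K, K <= N -> choosable e K ->
  exists k, k <= K /\ is_list_chromatic_number e k.
Proof.
elim => [|N IH] K KN hK.
  exists K; split => //; split => // j; lia.
case: (classic (exists j, j < K /\ choosable e j)) => [[j [jK hj]]|hn].
  have [k [kj hk]] := IH j ltac:(lia) hj.
  exists k; split => //; lia.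
exists K; split => //; split => // j jK hj; apply: hn; by exists j.
Qed.

Lemma in_sumn (s : seq nat) y : y \in s -> y <= sumn s.
Proof.
elim: s => [//|x s IH]; rewrite in_cons => /orP [/eqP ->|ys] /=; first exact: leq_addr.
apply: leq_trans (IH ys) _; exact: leq_addl.
Qed.

Theorem mainTheorem18 :
  forall eps : R, Rlt 0 eps ->
  exists n0 : nat,
    forall (n : nat) (e : rel 'I_n),
      (n0 <= n)%N ->
      simple_graph e ->
      (forall S : {set 'I_n},
          is_clique e S -> Rlt (INR #|S|) (Rmult (Rinv (INR 2)) (log2 (INR n)))) ->
      exists k : nat,
        is_list_chromatic_number e k /\
        Rle (INR k)
            (Rdiv (Rmult (Rplus (INR 2) eps) (INR n)) (log2 (INR n))).
Proof.
move=> eps e0.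
have [p hp] := INR_archimed eps 4 e0.
have p0 : 0 < p.
  case: p hp => [|p] //= hp; lra.
exists (2 ^ ((2*(2*p+3)) * (6 + p * (2*(2*p+3))) + 2*(2*p+3) + 2)).
move=> n e hn hs hcl.
set l := trunc_log 2 n.
have npos : 0 < n by apply: leq_trans hn; rewrite expn_gt0.
have hl := @trunc_log_max 2 _ _ isT hn. rewrite -/l in hl.
have nl : n < 2 ^ l.+1 := @trunc_log_ltn 2 n isT.
have ln : 2 ^ l <= n := @trunc_logP 2 n isT npos.
have [hj haj hb hpb] := params p0 hl.
move: hj haj hb hpb.
set j := (trunc_log 2 (p * (l + 1))).+1.
set a := l./2.+1.
set b := l - a - j.
move=> hj haj hb hpb.
have n1 : 1 < n.
  apply: leq_trans ln; have : 0 < l by lia. by case: (l) => // l' _; rewrite expnS; have := expn_gt0 2 l'; lia.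
have Llt : Rlt (log2 (INR n)) (INR (l + 1)) by apply: log2_lt => //; rewrite addn1.
have Lpos := log2_pos n1.
have hI : forall U : {set 'I_n}, 2 ^ (a + b) <= #|U| ->
    exists I : {set 'I_n}, I \subset U /\ indep e I /\ b <= #|I|.
  move=> U hU; case: (ramsey hs (erefl (a + b)) hU) => [[S [_ [Sc Sa]]]|[I [IU [Ii Ib]]]].
    exfalso; have := hcl S Sc; rewrite Sa.
    have : (l + 1 <= a.*2)%N by rewrite /a -(odd_double_half l) doubleS; case: (odd l) => /=; lia.
    move/leINR; rewrite -muln2 mult_INR (INR2) => h.
    lra.
  by exists I; rewrite Ib.
have hch : choosable e (n %/ b + 2 ^ (a + b)).
  move=> L hL.
  have hL' : forall v, uniq (L v) /\ size (L v) = n %/ b + 2 ^ (a + b).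
    by move=> v; have [h1 h2 _] := hL v.
  have hN : forall v y, y \in L v -> y < (\max_(w : 'I_n) sumn (L w)).+1.
    move=> v y yL; rewrite ltnS; apply: leq_trans (in_sumn yL) _.
    exact: (@leq_bigmax _ (fun w => sumn (L w)) v).
  have [c [cL ce]] := colour_iter (hs.2) (expn_gt0 2 (a + b)) hb (leqnn _) hL' hN hI
     (leqnn #|[set: 'I_n]|) (D := [::]) ltac:(by rewrite /= mul0n add0n cardsT card_ord).
  exists c; split.
    by move=> v; have := cL v; rewrite inE => /(_ isT) /andP [].
  by move=> u v euv; apply: ce; rewrite ?inE.
have [k [kK hk]] := min_choosable (leqnn _) hch.
exists k; split => //.
apply: Rle_trans (leINR kK) _.
apply: (real_final (p := p) (l := l)) => //. all: try lra.
exact: Kbound hj haj hb hpb ln (erefl _).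
Qed.
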